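(* In the setting of the context, let $\mathbf{X}\in\{0,1\}^E$ be the indicator vector of edges matched by MMP-ALG, and for $u\in U$ let $\mathbf{X}_u$ be the restriction of $\mathbf{X}$ to the coordinates in $E(u)$ (other entries set to $0$). Let $x^*_u=\sum_{e\in E(u)}x^*_e$ and let $\mathbf{e}_e$ be the unit vector with a $1$ only at coordinate $e$. Then, in the limit $T\to\infty$ with $|U|=o(\sqrt{T})$, $\Pr[\mathbf{X}_u=\mathbf{0}]=e^{-x^*_u}$ and $\Pr[\mathbf{X}_u=\mathbf{e}_e]=(1-e^{-x^*_u})\frac{x^*_e}{x^*_u}$ for every $e\in E(u)$.
   Context: Bipartite graph $G=(U,V,E)$; online rounds $t=1,\dots,T$, in each of which independently at most one $v\in V$ arrives, $v$ with probability $p_v$, $\sum_v p_v\le1$, $r_v=Tp_v\in[0,1]$. Each $u\in U$ can be matched at most once. $E(w)$ denotes the set of edges incident to $w$. $\mathbf{x}^*\in[0,1]^E$ satisfies $\sum_{e\in E(v)}x^*_e\le r_v$ for all $v\in V$ and $\sum_{e\in E(u)}x^*_e\le1$ for all $u\in U$. MMP-ALG: when $v$ arrives, sample at most one edge $e\in E(v)$, each $e$ with probability $x^*_e/r_v$; if $e=(u,v)$ is sampled and $u$ is still unmatched, match $e$, otherwise skip. *)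

(* Defs.v *)
From HB Require Import structures.
From mathcomp Require Import all_boot all_order all_algebra.
From mathcomp Require Import reals.
From mathcomp Require Import sequences exp.
Set Implicit Arguments. Unset Strict Implicit. Unset Printing Implicit Defensive.
Import Order.TTheory GRing.Theory Num.Theory.
Local Open Scope ring_scope.

Section MMP.
Variables (R : realType) (U V : finType).
Variable (E : {set U * V}).
Variable (T : nat).
Variable (p : V -> R).
Variable (x : U * V -> R).       (* the fractional solution x^* (only values on E matter) *)

Definition rate (v : V) : R := T%:R * p v.
Definition Ev (v : V) : {set U * V} := [set e in E | e.2 == v].
Definition Eu (u : U) : {set U * V} := [set e in E | e.1 == u].
Definition xu (u : U) : R := \sum_(e in Eu u) x e.

Definition instance_ok : Prop :=
  [/\ (forall v, 0 <= p v) /\ \sum_v p v <= 1,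
      (forall v, 0 <= rate v <= 1),
      (forall e, e \in E -> 0 <= x e <= 1),
      (forall v, \sum_(e in Ev v) x e <= rate v)
    & (forall u, \sum_(e in Eu u) x e <= 1)].

(* Outcome of one round: None = nobody arrives;
   Some (v, None) = v arrives and no edge is sampled;
   Some (v, Some e) = v arrives and edge e (in E(v)) is sampled. *)
Definition outcome := option (V * option (U * V)).

Definition round_pr (o : outcome) : R :=
  match o with
  | None => 1 - \sum_v p v
  | Some (v, None) => p v * (1 - \sum_(e in Ev v) x e / rate v)
  | Some (v, Some e) => if e \in Ev v then p v * (x e / rate v) else 0
  end.

Definition traj := {ffun 'I_T -> outcome}.
Definition traj_pr (w : traj) : R := \prod_(t < T) round_pr (w t).

(* MMP-ALG: process the rounds in order; a sampled edge (u,v) is matched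
   iff u is still unmatched.  mU = matched vertices of U, M = matched edges. *)
Fixpoint run (s : seq outcome) (mU : {set U}) (M : {set U * V}) : {set U * V} :=
  match s with
  | [::] => M
  | Some (v, Some e) :: s' =>
      if (e \in Ev v) && (e.1 \notin mU) then run s' (e.1 |: mU) (e |: M)
      else run s' mU M
  | _ :: s' => run s' mU M
  end.

Definition matched (w : traj) : {set U * V} :=
  run [seq w t | t <- enum 'I_T] set0 set0.

Definition Xvec (w : traj) : {ffun U * V -> bool} :=
  [ffun e => (e \in E) && (e \in matched w)].
Definition Xu (w : traj) (u : U) : {ffun U * V -> bool} :=
  [ffun e => (e \in Eu u) && Xvec w e].
Definition zero_vec : {ffun U * V -> bool} := [ffun => false].
Definition unit_vec (e : U * V) : {ffun U * V -> bool} := [ffun f => f == e].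

Definition Pr (A : pred traj) : R := \sum_(w | A w) traj_pr w.

End MMP.

(* Main.v *)
Require Import Defs.
From HB Require Import structures.
From mathcomp Require Import all_boot all_order all_algebra.
From mathcomp Require Import reals.
From mathcomp Require Import sequences exp.
From mathcomp Require Import ring lra.
Import Order.TTheory GRing.Theory Num.Theory.
Local Open Scope ring_scope.

Lemma big_optionR (R : realType) (X : finType) (F : option X -> R) :
  \sum_o F o = F None + \sum_t F (Some t).
Proof.
rewrite (bigD1 None) //=; congr (_ + _).
rewrite (reindex_omap Some id) /=; last by case.
by apply: eq_bigl => t; rewrite eqxx.
Qed.

Lemma powdiff (R : realType) (y z : R) n :
  0 <= y -> y <= z -> z <= 1 -> z ^+ n - y ^+ n <= n%:R * (z - y).
Proof.
move=> y0 yz z1; elim: n => [|n IH]; first by rewrite !expr0 subrr mul0r.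
have yn0 : 0 <= y ^+ n by rewrite exprn_ge0.
have yn1 : y ^+ n <= 1 by rewrite exprn_ile1 //; lra.
have ynz : y ^+ n <= z ^+ n by rewrite lerXn2r // ?nnegrE; lra.
rewrite !exprS -natr1.
nra.
Qed.

Lemma expbound (R : realType) (T : nat) (a : R) : (0 < T)%N -> 0 <= a <= 1 ->
  `| (1 - a / T%:R) ^+ T - expR (- a) | <= T%:R^-1.
Proof.
move=> T0 /andP[a0 a1].
have Tp : 0 < T%:R :> R by rewrite ltr0n.
set b := a / T%:R.
have b0 : 0 <= b by rewrite /b divr_ge0 // ltW.
have b1 : b <= 1.
  rewrite /b ler_pdivrMr // mul1r; apply: le_trans a1 _.
  by rewrite ler1n.
set z := expR (- b).
have ez : expR (- a) = z ^+ T.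
  by rewrite /z -expRM_natl /b mulrN mulrC divfK // gt_eqF.
have z1 : z <= 1 by rewrite /z -expR0 ler_expR; lra.
have yz : 1 - b <= z by rewrite /z; have := expR_ge1Dx (- b); lra.
have zb : z * (1 + b) <= 1.
  have := expR_ge1Dx b => h.
  have : z * expR b = 1 by rewrite /z -expRD addNr expR0.
  have := expR_ge0 (- b); rewrite -/z => h2; nra.
have zy : z - (1 - b) <= b * b by nra.
rewrite ez distrC ger0_norm; last first.
  by rewrite subr_ge0 lerXn2r // ?nnegrE; lra.
have hp := @powdiff R (1-b) z T ltac:(lra) yz z1.
apply: (le_trans hp).
apply: le_trans (_ : T%:R * (b * b) <= _).
  by rewrite ler_pM2l.
rewrite /b; have -> : T%:R * (a / T%:R * (a / T%:R)) = a * a / T%:R.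
  by field; rewrite gt_eqF.
rewrite ler_pdivrMr // mulVf ?gt_eqF //; nra.
Qed.

Set Implicit Arguments. Unset Strict Implicit.
Section Comb.
Variables (U V : finType) (E : {set U * V}) (u : U).

Definition hit (o : outcome U V) : bool :=
  if o is Some (v, Some e) then (e \in Ev E v) && (e.1 == u) else false.

Fixpoint firsthit (s : seq (outcome U V)) : option (U * V) :=
  match s with
  | [::] => None
  | Some (v, Some e) :: s' => if (e \in Ev E v) && (e.1 == u) then Some e else firsthit s'
  | _ :: s' => firsthit s'
  end.

Lemma run_matched s (mU : {set U}) (M : {set U * V}) : u \in mU ->
  [set f in run E s mU M | f.1 == u] = [set f in M | f.1 == u].
Proof.
elim: s mU M => [|o s IH] mU M uin //=.
case: o => [[v [e|]]|] //; try by apply: IH.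
case: ifP => [/andP[_ nm]|_]; last by apply: IH.
rewrite IH ?setU11 ?in_setU ?uin ?orbT //.
apply/setP => f; rewrite !inE.
case: (f =P e) => [->|] //=.
have -> : (e.1 == u) = false by apply: contraNF nm => /eqP ->.
by rewrite andbF.
Qed.

Lemma run_first s (mU : {set U}) (M : {set U * V}) : u \notin mU -> [set f in M | f.1 == u] = set0 ->
  [set f in run E s mU M | f.1 == u] = oapp (fun e => [set e]) set0 (firsthit s).
Proof.
elim: s mU M => [|o s IH] mU M uin M0 //=.
case: o => [[v [e|]]|] //=; try by apply: IH.
case: (boolP (e \in Ev E v)) => ev /=; last by apply: IH.
case: (boolP (e.1 == u)) => eu /=.
  rewrite (eqP eu) uin /= run_matched ?setU11 //.
  apply/setP => f; rewrite !inE.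
  case: (f =P e) => [->|]; first by rewrite eu.
  by move=> _ /=; have := M0; move/setP/(_ f); rewrite !inE.
case: ifP => _; last by apply: IH.
apply: IH.
  by rewrite !inE negb_or uin andbT eq_sym.
apply/setP => f; rewrite !inE.
case: (f =P e) => [->|]; first by rewrite (negbTE eu).
by move=> _ /=; have := M0; move/setP/(_ f); rewrite !inE.
Qed.

Lemma firsthit_Eu s e : firsthit s = Some e -> e \in Eu E u.
Proof.
elim: s => [|o s IH] //=.
case: o => [[v [f|]]|] //=; case: ifP => // /andP[fv fu] [<-].
by move: fv; rewrite !inE fu => /andP[->].
Qed.

Definition oedge (o : outcome U V) : option (U * V) :=
  if o is Some (_, Some e) then Some e else None.

Lemma firsthit_find s :
  firsthit s = if has hit s then oedge (nth None s (find hit s)) else None.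
Proof.
elim: s => [|o s IH] //=.
case: o => [[v [f|]]|] //=; case: ifP => //.
Qed.

Definition ev (e : U * V) : outcome U V := Some (e.2, Some e).

Lemma hit_ev e : e \in Eu E u -> hit (ev e).
Proof. by rewrite /hit /ev !inE => /andP[-> ->]; rewrite eqxx. Qed.

Lemma hit_oedge o e : hit o -> (oedge o == Some e) = (o == ev e).
Proof.
case: o => [[v [f|]]|] //= /andP[]; rewrite inE => /andP[_ /eqP <-] _.
by rewrite /ev; apply/eqP/eqP => [[->]|[] _ ->].
Qed.

End Comb.

Unset Implicit Arguments.

Section Prob.
Variables (R : realType) (U V : finType) (E : {set U * V}) (T : nat)
  (p : V -> R) (x : U * V -> R) (u : U).
Hypothesis T0 : (0 < T)%N.
Hypothesis ok : instance_ok E T p x.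

Local Notation r := (round_pr E T p x).

Lemma Tne0 : T%:R != 0 :> R.
Proof. by rewrite pnatr_eq0 -lt0n. Qed.

Lemma key e : e \in E -> p e.2 * (x e / rate T p e.2) = x e / T%:R.
Proof.
case: ok => [[p0 _] _ x01 sv _] eE.
case: (p e.2 =P 0) => [pe|pne].
  have xe0 : x e = 0.
    have := sv e.2; rewrite /rate pe mulr0 (bigD1 e) /=; last by rewrite !inE eE eqxx.
    have := x01 e eE => /andP[xe _].
    have : 0 <= \sum_(i in Ev E e.2 | i != e) x i.
      apply: sumr_ge0 => i; rewrite !inE => /andP[/andP[iE _] _].
      by case/andP: (x01 i iE).
    lra.
  by rewrite pe xe0 !mul0r.
rewrite /rate; field.
by rewrite Tne0; apply/eqP.
Qed.

Lemma sum_r : \sum_o r o = 1.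
Proof.
rewrite big_optionR /=.
have -> : \sum_(t : V * option (U * V)) r (Some t) = \sum_v \sum_oe r (Some (v, oe)).
  by rewrite pair_big; apply: eq_bigr => -[].
have -> : \sum_v \sum_oe r (Some (v, oe)) = \sum_v p v.
  apply: eq_bigr => v _; rewrite big_optionR /=.
  rewrite -big_mkcond /= -mulr_sumr -mulr_suml; ring.
ring.
Qed.

Lemma sum_hit : \sum_o r o * (hit E u o)%:R = xu E x u / T%:R.
Proof.
rewrite big_optionR /= mulr0 add0r.
have -> : \sum_(t : V * option (U * V)) r (Some t) * (hit E u (Some t))%:R
   = \sum_v \sum_oe r (Some (v, oe)) * (hit E u (Some (v, oe)))%:R.
  by rewrite pair_big; apply: eq_bigr => -[].
have -> : \sum_v \sum_oe r (Some (v, oe)) * (hit E u (Some (v, oe)))%:R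
   = \sum_v \sum_e (if (e \in Ev E v) && (e.1 == u) then x e / T%:R else 0).
  apply: eq_bigr => v _; rewrite big_optionR /= mulr0 add0r.
  apply: eq_bigr => e _.
  case: (boolP (e \in Ev E v)) => ev; last by rewrite mul0r.
  case: (boolP (e.1 == u)) => eu /=; last by rewrite mulr0.
  by move: ev; rewrite inE => /andP[eE /eqP ve]; rewrite -ve key // mulr1.
rewrite exchange_big /xu mulr_suml [RHS]big_mkcond /=.
apply: eq_bigr => e _.
rewrite (bigD1 e.2) //= big1 ?addr0; last first.
  by move=> v ne; rewrite /Ev inE eq_sym (negbTE ne) andbF.
by rewrite /Ev /Eu !inE eqxx andbT.
Qed.

Lemma r_ev e : e \in Eu E u -> r (ev e) = x e / T%:R.
Proof.
move=> eu; rewrite /= ifT; last by move: eu; rewrite !inE eqxx andbT => /andP[].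
by apply: key; move: eu; rewrite inE => /andP[].
Qed.


Local Notation seqw w := [seq w t | t <- enum 'I_T].

Lemma nth_seqw (w : traj U V T) (j : 'I_T) : nth None (seqw w) j = w j.
Proof.
by rewrite (nth_map j) ?size_enum_ord // nth_ord_enum.
Qed.

Lemma size_seqw (w : traj U V T) : size (seqw w) = T.
Proof. by rewrite size_map size_enum_ord. Qed.

Lemma Xu_eq (w : traj U V T) :
  Xu E w u = oapp (@unit_vec U V) (zero_vec U V) (firsthit E u (seqw w)).
Proof.
apply/ffunP => f; rewrite !ffunE.
have := @run_first U V E u (seqw w) set0 set0 (negbT (in_set0 u)).
have s0 : [set f in (set0 : {set U * V}) | f.1 == u] = set0.
  by apply/setP => g; rewrite !inE.
move=> /(_ s0) /setP /(_ f).
rewrite /matched !inE.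
case H: firsthit => [e|] /=; rewrite !ffunE /=.
  have eu := firsthit_Eu H.
  rewrite inE; case: (f =P e) => [->|_] /=.
    by move: eu; rewrite /Eu inE => /andP[-> ->] /=; rewrite andbT.
  by case: (f \in E); case: (f.1 == u);
     case: (f \in run E (seqw w) set0 set0).
by rewrite in_set0; case: (f \in E); case: (f.1 == u);
   case: (f \in run E (seqw w) set0 set0).
Qed.

Lemma oedge_hit o : hit E u o -> exists e, oedge o = Some e.
Proof. by case: o => [[v [f|]]|] //= _; exists f. Qed.

Lemma ev0 (w : traj U V T) :
  (Xu E w u == zero_vec U V) = [forall t, ~~ hit E u (w t)].
Proof.
rewrite Xu_eq firsthit_find.
have -> : [forall t, ~~ hit E u (w t)] = ~~ has (hit E u) (seqw w).
  apply/forallP/hasPn => [h o /mapP[t _ ->]|h t]; first exact: h.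
  by apply: h; apply/mapP; exists t; rewrite ?mem_enum.
case: ifP => h /=; last by rewrite eqxx.
have [e ->] := oedge_hit _ (nth_find None h) => /=.
by apply/eqP => /ffunP /(_ e); rewrite !ffunE eqxx.
Qed.

Lemma unit_inj oo e :
  (oapp (@unit_vec U V) (zero_vec U V) oo == unit_vec e) = (oo == Some e).
Proof.
case: oo => [f|] /=.
  apply/eqP/eqP => [/ffunP /(_ f)|[->]] //.
  by rewrite !ffunE eqxx => /esym/eqP ->.
by apply/eqP => /ffunP /(_ e); rewrite !ffunE eqxx.
Qed.

Definition cnd e (t j : nat) (o : outcome U V) : bool :=
  if (j < t)%N then ~~ hit E u o else if j == t then o == ev e else true.

Lemma find_eq (a : pred (outcome U V)) s i : (i < size s)%N ->
  (forall j, (j < i)%N -> ~~ a (nth None s j)) -> a (nth None s i) ->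
  find a s = i.
Proof.
move=> isz hb hi.
have hs : has a s by apply/hasP; exists (nth None s i) => //; apply: mem_nth.
case: (ltngtP (find a s) i) => // c.
  by have := hb _ c; rewrite nth_find.
by have := before_find None c; rewrite hi.
Qed.

Lemma eve (w : traj U V T) e : e \in Eu E u ->
  (Xu E w u == unit_vec e) = [exists t : 'I_T, [forall j : 'I_T, cnd e t j (w j)]].
Proof.
move=> eu.
rewrite Xu_eq unit_inj firsthit_find.
case: ifP => h.
  have hn := nth_find None h.
  rewrite (hit_oedge _ hn).
  have fT : (find (hit E u) (seqw w) < T)%N by move: h; rewrite has_find size_seqw.
  apply/eqP/existsP => [hq|[t /forallP ht]].
    exists (Ordinal fT); apply/forallP => j; rewrite /cnd /=.
    case: ifP => jl.
      by rewrite -nth_seqw (before_find None jl).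
    by case: ifP => // /eqP jf; rewrite -nth_seqw jf hq.
  have wt : w t = ev e by have := ht t; rewrite /cnd ltnn eqxx => /eqP.
  rewrite (@find_eq _ _ t) ?size_seqw // ?nth_seqw ?wt ?hit_ev //.
  move=> j jt; have jT := ltn_trans jt (ltn_ord t).
  have := ht (Ordinal jT); rewrite /cnd /= jt.
  by change j with (nat_of_ord (Ordinal jT)); rewrite nth_seqw.
have -> : (None == Some e) = false by [].
symmetry; apply/negbTE/existsP => -[t /forallP ht].
have wt : w t = ev e by have := ht t; rewrite /cnd ltnn eqxx => /eqP.
move/negbT: h => /hasP; apply; exists (w t); first by apply: map_f; rewrite mem_enum.
by rewrite wt hit_ev.
Qed.


Lemma prod_ind (I J : finType) (F : I -> J -> R) (c : I -> J -> bool) (f : {ffun I -> J}) :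
  (if [forall i, c i (f i)] then \prod_i F i (f i) else 0)
  = \prod_i (F i (f i) * (c i (f i))%:R).
Proof.
case: ifP => [/forallP h|/negbT]; first by apply: eq_bigr => i _; rewrite h mulr1.
rewrite negb_forall => /existsP [i hi].
by rewrite (bigD1 i) //= (negbTE hi) mulr0 mul0r.
Qed.

Lemma Pr0 : Pr E p x (fun w : traj U V T => Xu E w u == zero_vec U V)
  = (1 - xu E x u / T%:R) ^+ T.
Proof.
rewrite /Pr.
under eq_bigl => w do rewrite ev0.
rewrite big_mkcond /=.
under eq_bigr => w _ do rewrite /traj_pr (@prod_ind _ _ (fun _ o => r o) (fun _ o => ~~ hit E u o)).
rewrite -(bigA_distr_bigA (fun (_ : 'I_T) o => r o * (~~ hit E u o)%:R)) /=.
rewrite prodr_const card_ord; congr (_ ^+ _).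
have -> : \sum_o r o * (~~ hit E u o)%:R = \sum_o (r o - r o * (hit E u o)%:R).
  by apply: eq_bigr => o _; case: (hit E u o); rewrite /= ?mulr0 ?mulr1 ?subr0 ?subrr.
by rewrite sumrB sum_r sum_hit.
Qed.

Lemma prod_piece (t : 'I_T) (A B : R) :
  \prod_(j < T) (if (j < t)%N then A else if (j == t :> nat) then B else 1) = A ^+ t * B.
Proof.
rewrite -(big_mkord xpredT (fun j => if (j < t)%N then A else if j == t then B else 1)).
rewrite (big_cat_nat (leq0n t) (ltnW (ltn_ord t))) /=.
rewrite (big_cat_nat (leqnSn t) (ltn_ord t)) /= big_nat1 ltnn eqxx.
rewrite (eq_big_nat _ _ (F2 := fun _ => A)); last by move=> i /andP[_ ->].
rewrite prodr_const_nat subn0.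
rewrite (eq_big_nat _ _ (F2 := fun _ => 1)); last first.
  by move=> i /andP[ti _]; rewrite ltnNge ltnW //= gtn_eqF.
by rewrite big1_eq mulr1.
Qed.

Lemma Pre e : e \in Eu E u ->
  Pr E p x (fun w : traj U V T => Xu E w u == unit_vec e)
  = \sum_(t < T) (1 - xu E x u / T%:R) ^+ t * (x e / T%:R).
Proof.
move=> eu; rewrite /Pr.
under eq_bigl => w do rewrite (eve w e eu).
have -> : \sum_(w : traj U V T | [exists t : 'I_T, [forall j : 'I_T, cnd e t j (w j)]]) traj_pr E p x w
  = \sum_(w : traj U V T) \sum_(t < T) (if [forall j : 'I_T, cnd e t j (w j)] then traj_pr E p x w else 0).
  rewrite big_mkcond /=; apply: eq_bigr => w _.
  case: ifP => [/existsP [t ht]|/negbT]; last first.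
    rewrite negb_exists => /forallP h; apply/esym/big1 => t _.
    by rewrite (negbTE (h t)).
  rewrite (bigD1 t) //= ht big1 ?addr0 // => t' ne.
  case: ifP => // ht'; exfalso.
  have wt : forall s : 'I_T, [forall j : 'I_T, cnd e s j (w j)] -> w s = ev e.
    by move=> s /forallP hs; have := hs s; rewrite /cnd ltnn eqxx => /eqP.
  have hh := hit_ev eu.
  move/forallP: ht => ht; move/forallP: ht' => ht'.
  case: (ltngtP t t') => c.
  - by have := ht' t; rewrite /cnd c (wt t) ?hh //; apply/forallP.
  - by have := ht t'; rewrite /cnd c (wt t') ?hh //; apply/forallP.
  - by move: ne; rewrite (val_inj c) eqxx.
rewrite exchange_big /=; apply: eq_bigr => t _.
under eq_bigr => w _ do rewrite /traj_pr (@prod_ind _ _ (fun _ o => r o) (fun (j : 'I_T) o => cnd e t j o)).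
rewrite -(bigA_distr_bigA (fun (j : 'I_T) o => r o * (cnd e t j o)%:R)) /=.
rewrite -prod_piece; apply: eq_bigr => j _; rewrite /cnd.
case: ifP => _.
  have -> : \sum_o r o * (~~ hit E u o)%:R = \sum_o (r o - r o * (hit E u o)%:R).
    by apply: eq_bigr => o _; case: (hit E u o); rewrite /= ?mulr0 ?mulr1 ?subr0 ?subrr.
  by rewrite sumrB sum_r sum_hit.
case: ifP => _.
  rewrite (bigD1 (ev e)) //= eqxx mulr1 big1 ?addr0; first exact: r_ev.
  by move=> o /negbTE ->; rewrite mulr0.
by under eq_bigr => o _ do rewrite mulr1; rewrite sum_r.
Qed.

End Prob.

Theorem lemma3 (R : realType) (U V : nat -> finType)
  (E : forall T : nat, {set U T * V T})
  (p : forall T : nat, V T -> R)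
  (x : forall T : nat, U T * V T -> R) :
  (forall T : nat, (0 < T)%N -> instance_ok (E T) T (p T) (x T)) ->
  (* |U| = o(sqrt T) *)
  (forall eps : R, 0 < eps -> exists N : nat, forall T : nat, (N <= T)%N ->
     (#|U T|)%:R <= eps * Num.sqrt (T%:R : R)) ->
  forall eps : R, 0 < eps -> exists N : nat, forall T : nat, (N <= T)%N ->
    forall u : U T,
      `| Pr (E T) (p T) (x T) (fun w : traj (U T) (V T) T => Xu (E T) w u == zero_vec _ _) - expR (- xu (E T) (x T) u) | <= eps
      /\ forall e, e \in Eu (E T) u ->
        `| Pr (E T) (p T) (x T) (fun w : traj (U T) (V T) T => Xu (E T) w u == unit_vec e)
           - (1 - expR (- xu (E T) (x T) u)) * (x T e / xu (E T) (x T) u) | <= eps.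
Proof.
move=> hok _ eps eps0.
have ei0 : 0 <= eps^-1 by rewrite invr_ge0 ltW.
have hB := archi_boundP ei0.
exists (Num.Def.archi_bound eps^-1).+1 => T NT u.
have T0 : (0 < T)%N by apply: leq_trans NT.
have Tp : 0 < T%:R :> R by rewrite ltr0n.
have bnd : T%:R^-1 <= eps.
  rewrite -[X in _ <= X]invrK lef_pV2 ?posrE ?invr_gt0 //.
  apply: ltW; apply: lt_le_trans hB _; rewrite ler_nat; exact: ltnW.
have ok := hok T T0.
case: (ok) => _ _ x01 _ xu1.
have xe0 : forall e, e \in Eu (E T) u -> 0 <= x T e.
  by move=> e; rewrite inE => /andP[eE _]; case/andP: (x01 e eE).
set a := xu (E T) (x T) u.
have a0 : 0 <= a by apply: sumr_ge0.
have a1 : a <= 1 by apply: xu1.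
have hb := @expbound R T a T0 (introT andP (conj a0 a1)).
split.
  by rewrite Pr0 //; apply: le_trans hb bnd.
move=> e eu; rewrite Pre //.
have xea : x T e <= a.
  rewrite /a /xu (bigD1 e) //= lerDl; apply: sumr_ge0 => f /andP[] *; exact: xe0.
have xe := xe0 e eu.
case: (a =P 0) => [az|anz].
  have -> : x T e = 0 by apply/le_anti/andP; split => //; rewrite -az.
  rewrite big1 => [|t _]; last by rewrite !mul0r mulr0.
  by rewrite !mul0r mulr0 subr0 normr0 ltW.
set y := 1 - a / T%:R.
have hs : (\sum_(t < T) y ^+ t) * (a / T%:R) = 1 - y ^+ T.
  have h := subrX1 y T.
  rewrite -(opprB (y ^+ T) 1) h /y; ring.
rewrite -mulr_suml.
have -> : (\sum_(t < T) y ^+ t) * (x T e / T%:R) = (1 - y ^+ T) * (x T e / a).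
  rewrite -hs; field; apply/andP; split; [exact/eqP | by rewrite gt_eqF].
have k0 : 0 <= x T e / a by rewrite divr_ge0.
have k1 : x T e / a <= 1.
  by rewrite ler_pdivrMr ?mul1r // lt_neqAle eq_sym; apply/andP; split; [exact/eqP|].
rewrite -mulrBl normrM (ger0_norm k0).
apply: le_trans bnd; apply: le_trans hb.
rewrite distrC.
have -> : 1 - expR (- a) - (1 - y ^+ T) = y ^+ T - expR (- a) by ring.
have := normr_ge0 (y ^+ T - expR (- a)); nra.
Qed.
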